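(* Let $I\subset S=K[x_1,\dots,x_t]$ be a proper monomial ideal and $n\ge 1$. Let $\mathbf X^{\mathbf a}$ be a monomial corresponding to $v(I^n)$, i.e. $\deg\mathbf X^{\mathbf a}=v(I^n)$ and $(I^n:\mathbf X^{\mathbf a})\in\operatorname{Ass}(S/I^n)$. If $\mathbf X^{\mathbf G}$ is a proper divisor of $\mathbf X^{\mathbf a}$, then $v(I^n)=v(I^n:\mathbf X^{\mathbf G})+\deg\mathbf X^{\mathbf G}$.
   Context: $K$ is a field and $S$ is standard graded. For a proper graded ideal $J$, the $v$-number is $v(J)=\min\{k\ge 0 : \exists f\in S_k,\ \mathcal P\in\operatorname{Ass}(S/J) \text{ with } (J:f)=\mathcal P\}$. $\mathbf X^{\mathbf a}$ denotes the monomial $x_1^{a_1}\cdots x_t^{a_t}$. *)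

(* Defs.v *)
From HB Require Import structures.
From mathcomp Require Import all_boot all_order all_algebra.
From mathcomp Require Import mpoly.
From Stdlib Require Import ClassicalEpsilon.

Set Implicit Arguments.
Unset Strict Implicit.
Unset Printing Implicit Defensive.

Import GRing.Theory.
Local Open Scope ring_scope.

Section Ideals.
Variables (K : fieldType) (t : nat).
Local Notation S := {mpoly K[t]}.

Definition pideal := S -> Prop.

Definition ideal_eq (I J : pideal) := forall f, I f <-> J f.

Definition is_pideal (I : pideal) :=
  [/\ I 0, (forall f g, I f -> I g -> I (f + g)) & (forall r f, I f -> I (r * f))].

Definition ideal_gen (G : pideal) : pideal := fun f =>
  exists s : seq (S * S), (forall q, q \in s -> G q.2) /\
                          f = \sum_(q <- s) q.1 * q.2.

Definition monomial_ideal (I : pideal) :=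
  exists M : 'X_{1..t} -> Prop,
    ideal_eq I (ideal_gen (fun f => exists m, M m /\ f = 'X_[m])).

Definition proper_pideal (I : pideal) := ~ I 1.

Definition ideal_mul (I J : pideal) : pideal :=
  ideal_gen (fun f => exists a b, [/\ I a, J b & f = a * b]).

Fixpoint ideal_pow (I : pideal) (n : nat) : pideal :=
  match n with
  | 0 => fun _ => True
  | n'.+1 => ideal_mul (ideal_pow I n') I
  end.

Definition colon (J : pideal) (f : S) : pideal := fun g => J (g * f).

Definition prime_pideal (P : pideal) :=
  [/\ is_pideal P, ~ P 1 & forall a b, P (a * b) -> P a \/ P b].

(* Associated primes of S/J: primes of the form (J : f). *)
Definition Ass (J : pideal) (P : pideal) :=
  prime_pideal P /\ exists f : S, ideal_eq (colon J f) P.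

Definition vnum_pred (J : pideal) (k : nat) :=
  exists f : S, f \is k.-homog /\
    exists P, Ass J P /\ ideal_eq (colon J f) P.

Definition vnum_predb (J : pideal) : pred nat :=
  fun k => if excluded_middle_informative (vnum_pred J k) then true else false.

Lemma vnum_predbP (J : pideal) k : vnum_pred J k <-> vnum_predb J k.
Proof.
rewrite /vnum_predb; case: excluded_middle_informative => H; split => //.
Qed.

(* The v-number: the least such k (defaults to 0 if no such k exists,
   which does not happen for proper graded ideals). *)
Definition vnumber (J : pideal) : nat :=
  match excluded_middle_informative (exists k, vnum_predb J k) with
  | left H => ex_minn H
  | right _ => 0%N
  end.

End Ideals.

(* Main.v *)
Require Import Defs.
From HB Require Import structures.
From mathcomp Require Import all_boot all_order all_algebra.
From mathcomp Require Import mpoly.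
From Stdlib Require Import ClassicalEpsilon.

Import GRing.Theory.
Local Open Scope ring_scope.

Lemma vnumber_le (K : fieldType) (t : nat) (J : pideal K t) k :
  vnum_pred J k -> (vnumber J <= k)%N.
Proof.
move=> Hk; rewrite /vnumber; case: excluded_middle_informative => [H|H] //.
case: ex_minnP => m _ Hmin; apply: Hmin; exact/vnum_predbP.
Qed.

Lemma vnumber_spec (K : fieldType) (t : nat) (J : pideal K t) k :
  vnum_pred J k -> vnum_pred J (vnumber J).
Proof.
move=> Hk; rewrite /vnumber; case: excluded_middle_informative => [H|H].
  by case: ex_minnP => m Hm _; apply/vnum_predbP.
by exfalso; apply: H; exists k; apply/vnum_predbP.
Qed.

Theorem proposition4p6 (K : fieldType) (t : nat) (I : pideal K t) (n : nat)
    (a G : 'X_{1..t}) :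
  monomial_ideal I -> proper_pideal I -> (1 <= n)%N ->
  mdeg a = vnumber (ideal_pow I n) ->
  Ass (ideal_pow I n) (colon (ideal_pow I n) 'X_[a]) ->
  (G <= a)%MM -> G != a ->
  vnumber (ideal_pow I n) =
    (vnumber (colon (ideal_pow I n) 'X_[G]) + mdeg G)%N.
Proof.
move=> _ _ _ Ha [Hpr _] HGa _.
set J := ideal_pow I n.
have Ea : 'X_[a] = 'X_[a - G] * 'X_[G] :> {mpoly K[t]}.
  by rewrite -mpolyXD submK.
have Edeg : mdeg a = (mdeg (a - G) + mdeg G)%N by rewrite -mdegD submK.
have H1 : vnum_pred (colon J 'X_[G]) (mdeg (a - G)).
  exists 'X_[a - G]; split; first by rewrite dhomogX.
  exists (colon J 'X_[a]); split.
    split => //; exists 'X_[a - G] => g.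
    by rewrite /colon Ea mulrA.
  by move=> g; rewrite /colon Ea mulrA.
have H2 : forall k, vnum_pred (colon J 'X_[G]) k -> vnum_pred J (k + mdeg G).
  move=> k [f [Hf [P [[HP _] HfP]]]].
  exists (f * 'X_[G]); split.
    by apply: dhomogM => //; rewrite dhomogX.
  have HC : ideal_eq (colon J (f * 'X_[G])) P.
    by move=> g; rewrite /colon mulrA; apply: HfP.
  by exists P; split => //; split => //; exists (f * 'X_[G]).
have Hle := @vnumber_le _ _ (colon J 'X_[G]) _ H1.
have Hge := @vnumber_le _ _ J _ (H2 _ (@vnumber_spec _ _ (colon J 'X_[G]) _ H1)).
rewrite -/J -Ha in Hge *.
apply/eqP; rewrite eqn_leq Hge Edeg leq_add2r Hle //.
Qed.
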